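(* Let $G$ be either (a) the grid $P_3 \,\square\, P_n$ with $n\ge 3$, or (b) the grid $P_4\,\square\, P_n$ with $n\ge 4$. Then $$\gamma_t(G) \ge \left\lceil \frac{3\gamma(G)+2\gamma_c(G)}{6}\right\rceil.$$
   Context: All graphs are finite, simple and undirected. $P_m$ denotes the path on $m$ vertices. For graphs $G,H$, the Cartesian product $G\,\square\, H$ has vertex set $V(G)\times V(H)$, with $(u_1,v_1)$ adjacent to $(u_2,v_2)$ iff either $u_1=u_2$ and $v_1v_2\in E(H)$, or $v_1=v_2$ and $u_1u_2\in E(G)$. A set $S\subseteq V(G)$ is a dominating set if every vertex not in $S$ is adjacent to some vertex of $S$; $\gamma(G)$ is the minimum size of a dominating set. A set $S$ is a total dominating set if every vertex of $G$ (including those in $S$) is adjacent to some vertex of $S$; $\gamma_t(G)$ is the minimum size of a total dominating set. A set $S$ is a connected dominating set if it is dominating and the subgraph induced by $S$ is connected; $\gamma_c(G)$ is the minimum size of a connected dominating set. *)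

(* Defs.v *)
From mathcomp Require Import all_boot.
Set Implicit Arguments. Unset Strict Implicit. Unset Printing Implicit Defensive.

(* A simple graph is given by a vertex finType T and an adjacency relation
   adj : rel T (symmetric, irreflexive in all our uses). *)

Section Domination.
Variables (T : finType) (adj : rel T).

Definition dominating (S : {set T}) : bool :=
  [forall v, (v \notin S) ==> [exists u in S, adj v u]].

Definition total_dominating (S : {set T}) : bool :=
  [forall v, [exists u in S, adj v u]].

Definition induced_connected (S : {set T}) : bool :=
  [forall x in S, forall y in S,
     connect (fun u v => [&& u \in S, v \in S & adj u v]) x y].

Definition connected_dominating (S : {set T}) : bool :=
  dominating S && induced_connected S.

(* Minimum cardinality of a set satisfying P (defaults to #|T| if none). *)
Definition min_card (P : pred {set T}) : nat :=
  \big[minn/#|T|]_(S : {set T} | P S) #|S|.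

Definition gamma   := min_card dominating.
Definition gamma_t := min_card total_dominating.
Definition gamma_c := min_card connected_dominating.
End Domination.

Definition path_adj (m : nat) : rel 'I_m :=
  fun i j => (i.+1 == j :> nat) || (j.+1 == i :> nat).

Arguments path_adj m : clear implicits.

Definition cart_adj (A B : finType) (eA : rel A) (eB : rel B) : rel (A * B) :=
  fun x y => ((x.1 == y.1) && eB x.2 y.2) || ((x.2 == y.2) && eA x.1 y.1).

Definition grid_adj (m n : nat) : rel ('I_m * 'I_n) :=
  cart_adj (path_adj m) (path_adj n).
Arguments grid_adj m n : clear implicits.

(* Main.v *)
Require Import Defs.
From mathcomp Require Import all_boot zify.
Set Implicit Arguments. Unset Strict Implicit. Unset Printing Implicit Defensive.

Section Gen.
Variables (T : finType) (adj : rel T).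

Lemma min_card_le (P : pred {set T}) S : P S -> min_card P <= #|S|.
Proof.
move=> PS; rewrite /min_card.
have: S \in index_enum {set T} by rewrite mem_index_enum.
elim: (index_enum _) => [//|a r IH]; rewrite in_cons big_cons.
case/orP=> [/eqP<-|Sr]; first by rewrite PS geq_minl.
by case: (P a) => /=; rewrite ?geq_min IH ?orbT.
Qed.

Lemma min_card_ge (P : pred {set T}) L :
  L <= #|T| -> (forall S, P S -> L <= #|S|) -> L <= min_card P.
Proof.
move=> LT H; rewrite /min_card; elim/big_ind: _ => //.
by move=> x y Hx Hy; rewrite leq_min Hx Hy.
Qed.

Lemma min_card_leT (P : pred {set T}) : min_card P <= #|T|.
Proof.
rewrite /min_card; elim/big_ind: _ => //.
  by move=> x y Hx Hy; rewrite geq_min Hx.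
move=> S _; exact: max_card.
Qed.

Lemma gamma_le_t : gamma adj <= gamma_t adj.
Proof.
apply: min_card_ge; first exact: min_card_leT.
move=> S HS; apply: min_card_le.
apply/forallP=> v; apply/implyP=> _; exact: (forallP HS v).
Qed.

Lemma tdom_weight (w : T -> nat) c S :
  (forall u, \sum_(v | adj v u) w v <= c) -> total_dominating adj S ->
  \sum_v w v <= c * #|S|.
Proof.
move=> Hc HS.
apply: (@leq_trans (\sum_v \sum_(u in S) w v * adj v u)).
  apply: leq_sum => v _.
  have /existsP [u /andP [uS avu]] := forallP HS v.
  rewrite (bigD1 u) //= avu muln1; exact: leq_addr.
rewrite exchange_big /= -sum1_card big_distrr /=.
apply: leq_sum => u _; rewrite muln1.
apply: leq_trans (Hc u); rewrite [X in _ <= X]big_mkcond /=.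
by apply: leq_sum => v _; case: (adj v u); rewrite ?muln1 ?muln0.
Qed.
End Gen.

Lemma leq_addr_cardUI (T : finType) (A B : {pred T}) k :
  #|A| + #|B| <= k -> #|[predU A & B]| <= k.
Proof. by rewrite -cardUI; apply: leq_trans; rewrite leq_addr. Qed.

Lemma path_nb_card n (j0 : 'I_n) : #|[pred j | path_adj n j j0]| <= 2.
Proof.
apply: (@leq_trans #|[predU [pred j : 'I_n | val j == j0.+1] & [pred j : 'I_n | (val j).+1 == j0]]|).
  apply: subset_leq_card; apply/subsetP=> j; rewrite !inE /path_adj.
  by case/orP=> H; apply/orP; [right|left]; rewrite // eq_sym.
apply: leq_addr_cardUI.
have H1 (P : nat -> bool) k : (forall x, P x -> x = k) -> #|[pred j : 'I_n | P (val j)]| <= 1.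
  move=> HP; apply/card_le1_eqP=> x y; rewrite !inE => /HP Hx /HP Hy.
  by apply: val_inj; rewrite /= Hx Hy.
rewrite -[2]/(1 + 1) leq_add //.
  by apply: (H1 (fun x => x == j0.+1) j0.+1) => x /eqP.
by apply: (H1 (fun x => x.+1 == j0) j0.-1) => x /eqP <-.
Qed.

Lemma grid_nb m n (wr : 'I_m -> nat) (u : 'I_m * 'I_n) :
  \sum_(v | grid_adj m n v u) wr v.1 <= 2 * wr u.1 + \sum_(i | path_adj m i u.1) wr i.
Proof.
apply: (@leq_trans (\sum_(v | (v.1 == u.1) && path_adj n v.2 u.2) wr v.1 +
                    \sum_(v | path_adj m v.1 u.1 && (v.2 == u.2)) wr v.1)).
  rewrite big_mkcond [X in _ <= X + _]big_mkcond [X in _ <= _ + X]big_mkcond -big_split /=.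
  apply: leq_sum => v _; rewrite /grid_adj /cart_adj.
  rewrite [path_adj m _ _ && _]andbC; case: ((v.1 == u.1) && _); case: (_ && _) => //=; by rewrite ?leq_addr.
rewrite -!(pair_big (fun i => i == u.1) (fun j => path_adj n j u.2) (fun i _ => wr i)).
rewrite -!(pair_big (fun i => path_adj m i u.1) (fun j => j == u.2) (fun i _ => wr i)).
rewrite big_pred1_eq sum_nat_const mulnC leq_add //.
  by rewrite [2 * _]mulnC leq_mul2l; apply/orP; right; exact: (path_nb_card u.2).
by apply: eq_leq; apply: eq_bigr => i _; rewrite big_pred1_eq.
Qed.

Definition w4 (i : 'I_4) : nat := if (val i == 0) || (val i == 3) then 2 else 1.
Definition w3 (i : 'I_3) : nat := if val i == 1 then 0 else 1.

Lemma w4_ok (i0 : 'I_4) : 2 * w4 i0 + \sum_(i | path_adj 4 i i0) w4 i <= 5.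
Proof. case: i0 => [[|[|[|[|k]]]] Hi] //. all: by rewrite big_mkcond !big_ord_recl big_ord0. Qed.
Lemma w3_ok (i0 : 'I_3) : 2 * w3 i0 + \sum_(i | path_adj 3 i i0) w3 i <= 2.
Proof. case: i0 => [[|[|[|k]]] Hi] //; by rewrite big_mkcond !big_ord_recl big_ord0. Qed.

Lemma min_card_geM (T : finType) (P : pred {set T}) f k :
  f <= k * #|T| -> (forall S, P S -> f <= k * #|S|) -> f <= k * min_card P.
Proof.
move=> LT H; rewrite /min_card; elim/big_ind: _ => //.
by move=> x y Hx Hy; rewrite /minn; case: ifP.
Qed.

Lemma card_grid m n : #|{: 'I_m * 'I_n}| = m * n.
Proof. by rewrite card_prod !card_ord. Qed.

Lemma sum_grid m n (wr : 'I_m -> nat) :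
  \sum_(v : 'I_m * 'I_n) wr v.1 = n * \sum_i wr i.
Proof.
rewrite -(pair_bigA _ (fun i _ => wr i)) big_distrr /=.
by apply: eq_bigr => i _; rewrite sum_nat_const card_ord.
Qed.

Lemma gt4 n : 6 * n <= 5 * gamma_t (grid_adj 4 n).
Proof.
apply: min_card_geM; first by rewrite card_grid; lia.
move=> S HS.
have := @tdom_weight _ _ (fun v => w4 v.1) _ _ (fun u => leq_trans (grid_nb w4 u) (w4_ok u.1)) HS.
rewrite sum_grid; apply: leq_trans.
by rewrite !big_ord_recl big_ord0 /= mulnC.
Qed.

Lemma gt3 n : 2 * n <= 2 * gamma_t (grid_adj 3 n).
Proof.
apply: min_card_geM; first by rewrite card_grid; lia.
move=> S HS.
have := @tdom_weight _ _ (fun v => w3 v.1) _ _ (fun u => leq_trans (grid_nb w3 u) (w3_ok u.1)) HS.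
rewrite sum_grid; apply: leq_trans.
by rewrite !big_ord_recl big_ord0 /= mulnC.
Qed.

Lemma grid_sym m n : symmetric (grid_adj m n).
Proof.
move=> x y; rewrite /grid_adj /cart_adj /path_adj ![y.1 == _]eq_sym ![y.2 == _]eq_sym.
by rewrite [(y.2.+1 == _) || _]orbC [(y.1.+1 == _) || _]orbC.
Qed.

Definition ie m n (S : {set 'I_m * 'I_n}) :=
  fun u v => [&& u \in S, v \in S & grid_adj m n u v].

Lemma conn_root m n (S : {set 'I_m * 'I_n}) r0 :
  (forall x, x \in S -> connect (ie S) r0 x) -> induced_connected (grid_adj m n) S.
Proof.
move=> H; apply/forallP=> x; apply/implyP=> xS; apply/forallP=> y; apply/implyP=> yS.
have sym : connect_sym (ie S).
  apply: sym_connect_sym => u v; rewrite /ie grid_sym.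
  by case: (u \in S); case: (v \in S).
apply: connect_trans (H y yS); rewrite sym; exact: H.
Qed.

Lemma row_connect m n (S : {set 'I_m * 'I_n}) (r : 'I_m) (Hn : 0 < n) :
  (forall j, (r, j) \in S) -> forall j : 'I_n, connect (ie S) (r, Ordinal Hn) (r, j).
Proof.
move=> HS j; suff: forall k (Hk : k < n), connect (ie S) (r, Ordinal Hn) (r, Ordinal Hk).
  by case: j => k Hk; apply.
elim=> [|k IH] Hk.
  by rewrite (_ : Ordinal Hk = Ordinal Hn) //; apply: val_inj.
apply: (connect_trans (IH (ltnW Hk))); apply: connect1.
by rewrite /ie !HS /grid_adj /cart_adj /path_adj /= !eqxx.
Qed.

Lemma card_setP m n (P : 'I_m -> 'I_n -> bool) :
  #|[set v : 'I_m * 'I_n | P v.1 v.2]| = \sum_i \sum_j (P i j : nat).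
Proof.
rewrite (pair_bigA _ (fun i j => (P i j : nat))) -sum1_card big_mkcond /=.
by apply: eq_bigr => v _; rewrite inE.
Qed.

Definition S3 n := [set v : 'I_3 * 'I_n | val v.1 == 1].

Lemma gc3 n : 0 < n -> gamma_c (grid_adj 3 n) <= n.
Proof.
move=> Hn.
have HS3 : #|S3 n| = n.
  rewrite (card_setP (fun (i : 'I_3) (_ : 'I_n) => val i == 1)).
  by rewrite !big_ord_recl big_ord0 /= !sum_nat_const card_ord; lia.
apply: (@leq_trans #|S3 n|); last by rewrite HS3.
apply: min_card_le; apply/andP; split.
  apply/forallP=> -[i j]; apply/implyP; rewrite inE /= => Hi.
  apply/existsP; exists (@Ordinal 3 1 isT, j); rewrite inE /=.
  apply/orP; right; rewrite eqxx /=.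
  by case: i Hi => [[|[|[|k]]] Hk].
apply: (@conn_root _ _ _ (@Ordinal 3 1 isT, Ordinal Hn)) => -[i j].
rewrite inE /= => /eqP Hi.
have -> : i = @Ordinal 3 1 isT by apply: val_inj.
by apply: row_connect => j'; rewrite inE.
Qed.

Definition r0 : 'I_4 := @Ordinal 4 0 isT.
Definition r1 : 'I_4 := @Ordinal 4 1 isT.
Definition r2 : 'I_4 := @Ordinal 4 2 isT.
Definition r3 : 'I_4 := @Ordinal 4 3 isT.

Lemma ord4 (i : 'I_4) : i = r0 \/ i = r1 \/ i = r2 \/ i = r3.
Proof.
case: i => [[|[|[|[|k]]]] Hk] //.
- by left; apply: val_inj.
- by right; left; apply: val_inj.
- by right; right; left; apply: val_inj.
- by right; right; right; apply: val_inj.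
Qed.

Definition P4 n (i : 'I_4) (j : 'I_n) : bool :=
  (val i == 1) || ((1 < val i) && (j %% 3 == 1)) ||
  ((val i == 3) && (n %% 3 == 1) && (j.+2 == n)).

Definition S4 n := [set v : 'I_4 * 'I_n | P4 v.1 v.2].

Lemma sum_mod3 n : \sum_(j < n) (j %% 3 == 1 : nat) = (n + 1) %/ 3.
Proof.
rewrite -(big_mkord xpredT (fun j => (j %% 3 == 1 : nat))).
elim: n => [|n IH]; first by rewrite big_geq.
rewrite big_nat_recr //= IH; case: eqP => h; lia.
Qed.

Lemma sum_le1 n (P : nat -> bool) k :
  (forall x, P x -> x = k) -> \sum_(j < n) (P j : nat) <= 1.
Proof.
move=> HP.
have -> : \sum_(j < n) (P j : nat) = \sum_(j < n | P j) 1 by rewrite [RHS]big_mkcond.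
rewrite sum1_card; apply/card_le1_eqP=> x y; rewrite !unfold_in => /HP Hx /HP Hy.
by apply: val_inj; rewrite /= Hx Hy.
Qed.

Lemma card_S4 n : 3 * #|S4 n| <= 5 * n + 2.
Proof.
rewrite /S4 (card_setP (@P4 n)) !big_ord_recl big_ord0 /= /P4 /=.
have E0 : \sum_(j < n) ((j %% 3 == 1) || (n %% 3 == 1) && (j.+2 == n) : nat)
          <= (n + 1) %/ 3 + (n %% 3 == 1).
  rewrite -sum_mod3.
  apply: (@leq_trans (\sum_(j < n) (j %% 3 == 1 : nat) +
                      \sum_(j < n) ((n %% 3 == 1) && (j.+2 == n) : nat))).
    rewrite -big_split /=; apply: leq_sum => j _.
    by case: (_ %% 3 == 1); case: (_ && _).
  rewrite leq_add2l; case: (n %% 3 == 1) => /=.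
    by apply: (@sum_le1 n (fun j => j.+2 == n) n.-2) => x /eqP <-.
  by rewrite big1.
rewrite !sum_nat_const card_ord.
under eq_bigr => j _ do rewrite orbF.
rewrite sum_mod3; move: E0; case: (n %% 3 =P 1) => h /=; lia.
Qed.

Lemma dom4 n : 4 <= n -> dominating (grid_adj 4 n) (S4 n).
Proof.
move=> Hn; apply/forallP=> -[i j]; apply/implyP.
case: (ord4 i) => [->|[->|[->|->]]]; rewrite inE /= /P4 /= => Hv; apply/existsP.
- exists (r1, j); rewrite inE /= /P4 /=.
  by apply/orP; right; rewrite eqxx.
- by [].
- exists (r1, j); rewrite inE /= /P4 /=.
  by apply/orP; right; rewrite eqxx.
have Hj := ltn_ord j.
have Hjm : j.-1 < n by lia.
move: Hv; rewrite negb_or negb_and => /andP [/eqP h1 h2].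
have h2' : n %% 3 = 1 -> j.+2 <> n.
  by move=> e1 e2; move: h2; rewrite e1 e2 !eqxx.
case: (j %% 3 =P 2) => h.
  exists (r3, Ordinal Hjm); rewrite inE /= /P4 /= /grid_adj /cart_adj /= /path_adj /=.
  apply/andP; split; apply/orP; left; first by apply/eqP; lia.
  by apply/orP; right; apply/eqP; lia.
case: (boolP (j.+1 < n)) => Hj1.
  exists (r3, Ordinal Hj1); rewrite inE /= /P4 /= /grid_adj /cart_adj /= /path_adj /=.
  apply/andP; split; apply/orP; left; first by apply/eqP; lia.
  by apply/orP; left; apply/eqP; lia.
exists (r3, Ordinal Hjm); rewrite inE /= /P4 /= /grid_adj /cart_adj /= /path_adj /=.
apply/andP; split; first by apply/orP; right; apply/andP; split; apply/eqP; lia.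
by apply/orP; left; apply/orP; right; apply/eqP; lia.
Qed.

Lemma conn4 n : 4 <= n -> induced_connected (grid_adj 4 n) (S4 n).
Proof.
move=> Hn; have H0 : 0 < n by lia.
have row1 : forall j', connect (ie (S4 n)) (r1, Ordinal H0) (r1, j').
  by apply: row_connect => j'; rewrite inE /P4.
have stem2 : forall j' : 'I_n, j' %% 3 == 1 -> connect (ie (S4 n)) (r1, Ordinal H0) (r2, j').
  move=> j' h; apply: (connect_trans (row1 j')); apply: connect1.
  by rewrite /ie !inE /P4 /= h /grid_adj /cart_adj /path_adj /= eqxx.
have stem3 : forall j' : 'I_n, j' %% 3 == 1 -> connect (ie (S4 n)) (r1, Ordinal H0) (r3, j').
  move=> j' h; apply: (connect_trans (stem2 j' h)); apply: connect1.
  by rewrite /ie !inE /P4 /= h /grid_adj /cart_adj /path_adj /= eqxx.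
apply: (@conn_root _ _ _ (r1, Ordinal H0)) => -[i j].
case: (ord4 i) => [->|[->|[->|->]]]; rewrite inE /P4 //=.
- by rewrite orbF; apply: stem2.
case/orP; first exact: stem3.
case/andP=> h1 h2.
have Hjm : j.-1 < n by lia.
apply: (connect_trans (stem3 (Ordinal Hjm) _)); first by apply/eqP; rewrite /=; move/eqP: h2 => h2; move/eqP: h1; lia.
apply: connect1; rewrite /ie !inE /P4 /= h1 h2 !andTb orbT /=.
have -> : j.-1 %% 3 == 1 by move/eqP: h1; move/eqP: h2 => h2 h1; apply/eqP; lia.
rewrite /grid_adj /cart_adj /path_adj /=.
by apply/orP; left; apply/orP; left; apply/eqP; move/eqP: h2; lia.
Qed.

Lemma gc4 n : 4 <= n -> 3 * gamma_c (grid_adj 4 n) <= 5 * n + 2.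
Proof.
move=> Hn; apply: leq_trans (card_S4 n); rewrite leq_mul2l /=.
by apply: min_card_le; rewrite /connected_dominating dom4 // conn4.
Qed.

Theorem proposition2p16 (m n : nat) :
  (m = 3 /\ 3 <= n) \/ (m = 4 /\ 4 <= n) ->
  (3 * gamma (grid_adj m n) + 2 * gamma_c (grid_adj m n) + 5) %/ 6
    <= gamma_t (grid_adj m n).
Proof.
case=> [[-> Hn]|[-> Hn]].
  have a := gamma_le_t (grid_adj 3 n); have b := gt3 n.
  have c := gc3 (ltac:(lia) : 0 < n).
  lia.
have a := gamma_le_t (grid_adj 4 n); have b := gt4 n; have c := gc4 Hn.
lia.
Qed.
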